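(* Let $H$ be a fixed graph, $p\in[0,1)$, and let $G$ be an online graph together with an arbitrary sequence of advice bits $u_1(G),u_2(G),\dots\in\{0,1\}$, such that $G$ is not $H$-free. Run $\mathrm{ALG}_p$ on $G$ with this advice (with arbitrary choices among simultaneously appearing copies of $H$), and let $\tilde d,\tilde e$ be the final values of the counters $d,e$. If $\tilde d+\tilde e>0$, then $$\frac{\tilde d}{\tilde e+\tilde d}\le (1-p)+\frac{1}{\tilde e+\tilde d}.$$
   Context: All graphs are finite, simple and undirected. An induced copy of $H$ in $G$ is an induced subgraph of $G$ isomorphic to $H$; $G$ is $H$-free if it has no induced copy of $H$. An online graph $G$ has its vertices $v_1,\dots,v_n$ revealed one at a time (each together with its edges to previously revealed vertices); with predictions, when $v_t$ is revealed the algorithm also receives one bit $u_t(G)\in\{0,1\}$. Algorithm $\mathrm{ALG}_p$ (parameter $p\in[0,1)$, $k=|V(H)|$): it maintains counters $d$ and $e$, initially $0$. Deleted vertices are removed permanently. After each vertex is revealed, as long as the current remaining graph contains an induced copy of $H$, it picks one such copy (arbitrarily) and applies the first applicable case: (Case 1) If the copy contains no vertex with advice bit $1$ (or such a copy has appeared at some earlier point), then from now on the algorithm deletes all vertices of every copy of $H$ that appears, without changing $d$ or $e$. (Case 2) Else, if $d=0$ or $e/(e+d)>p$: delete all $k$ vertices of the copy and increase $d$ by $1$. (Case 3) Else: delete one vertex of the copy with advice bit $1$ (the earliest-revealed such vertex) and increase $e$ by $1$. This is repeated until the remaining graph is $H$-free, before the next vertex is revealed. *)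

(* Defs.v *)
From mathcomp Require Import all_boot all_order all_algebra.
Import Order.TTheory GRing.Theory Num.Theory.
Local Open Scope ring_scope.
Set Implicit Arguments. Unset Strict Implicit. Unset Printing Implicit Defensive.

(* Graphs: a simple graph on a finType T is a symmetric irreflexive rel T.
   The online graph G has vertex set 'I_n, vertex i being v_{i+1}, revealed
   in the order of indices. *)

Definition induced_copy (VH : finType) (hE : rel VH) (n : nat) (gE : rel 'I_n)
  (C : {set 'I_n}) : Prop :=
  exists f : VH -> 'I_n,
    injective f /\ f @: [set: VH] = C /\ (forall x y, hE x y = gE (f x) (f y)).

Definition H_free_on (VH : finType) (hE : rel VH) (n : nat) (gE : rel 'I_n)
  (S : {set 'I_n}) : Prop :=
  forall C : {set 'I_n}, C \subset S -> ~ induced_copy hE gE C.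

(* State of ALG_p: number of revealed vertices, current remaining vertex set,
   counters d and e, and the Case-1 flag ("from now on delete all copies"). *)
Record alg_state (n : nat) := AlgState {
  revealed : nat;
  remaining : {set 'I_n};
  dcount : nat;
  ecount : nat;
  case1_mode : bool }.

Definition alg_init (n : nat) : alg_state n := @AlgState n 0 set0 0 0 false.

Inductive alg_step (R : realFieldType) (p : R) (VH : finType) (hE : rel VH)
  (n : nat) (gE : rel 'I_n) (u : 'I_n -> bool) :
  alg_state n -> alg_state n -> Prop :=
| step_reveal (t : nat) (Ht : (t < n)%N) (S : {set 'I_n}) (d e : nat) (b : bool) :
    H_free_on hE gE S ->
    @alg_step R p VH hE n gE u (@AlgState n t S d e b)
                       (@AlgState n t.+1 (S :|: [set Ordinal Ht]) d e b)
| step_case1 (t : nat) (S : {set 'I_n}) (d e : nat) (b : bool) (C : {set 'I_n}) :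
    C \subset S -> induced_copy hE gE C ->
    (b || [forall v in C, ~~ u v]) ->
    @alg_step R p VH hE n gE u (@AlgState n t S d e b)
                       (@AlgState n t (S :\: C) d e true)
| step_case2 (t : nat) (S : {set 'I_n}) (d e : nat) (b : bool) (C : {set 'I_n}) :
    C \subset S -> induced_copy hE gE C ->
    ~~ (b || [forall v in C, ~~ u v]) ->
    ((d == 0)%N || (p < e%:R / (e + d)%:R)) ->
    @alg_step R p VH hE n gE u (@AlgState n t S d e b)
                       (@AlgState n t (S :\: C) d.+1 e b)
| step_case3 (t : nat) (S : {set 'I_n}) (d e : nat) (b : bool) (C : {set 'I_n}) (v : 'I_n) :
    C \subset S -> induced_copy hE gE C ->
    ~~ (b || [forall v in C, ~~ u v]) ->
    ~~ ((d == 0)%N || (p < e%:R / (e + d)%:R)) ->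
    v \in C -> u v -> (forall w, w \in C -> u w -> (v <= w)%N) ->
    @alg_step R p VH hE n gE u (@AlgState n t S d e b)
                       (@AlgState n t (S :\ v) d e.+1 b).

Inductive alg_reach (R : realFieldType) (p : R) (VH : finType) (hE : rel VH)
  (n : nat) (gE : rel 'I_n) (u : 'I_n -> bool) :
  alg_state n -> alg_state n -> Prop :=
| reach_refl s : @alg_reach R p VH hE n gE u s s
| reach_step s1 s2 s3 :
    @alg_step R p VH hE n gE u s1 s2 -> @alg_reach R p VH hE n gE u s2 s3 ->
    @alg_reach R p VH hE n gE u s1 s3.

(* Main.v *)
Require Import Defs.
From mathcomp Require Import all_boot all_order all_algebra.
From mathcomp Require Import ring lra.
Import Order.TTheory GRing.Theory Num.Theory.
Local Open Scope ring_scope.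

Definition inv_ok (R : realFieldType) (p : R) n (s : alg_state n) : Prop :=
  p * (dcount s)%:R - (1 - p) * (ecount s)%:R <= 1.

Lemma step_inv (R : realFieldType) (p : R) (VH : finType) (hE : rel VH)
  (n : nat) (gE : rel 'I_n) (u : 'I_n -> bool) s1 s2 :
  0 <= p -> p < 1 ->
  @alg_step R p VH hE n gE u s1 s2 -> @inv_ok R p n s1 -> @inv_ok R p n s2.
Proof.
move=> p0 p1 []; rewrite /inv_ok //=.
- move=> t S d e b C _ _ _ /orP[/eqP -> | H] He.
    have : 0 <= e%:R :> R by [].
    nra.
  have de : (0 < (e + d)%N%:R :> R).
    rewrite ltr0n addn_gt0; apply/orP; left.
    case: e H He => //=; rewrite mul0r; lra.
  move: H; rewrite ltr_pdivlMr // natrD -!natr1 => H.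
  have : 0 <= d%:R :> R by [].
  have : 0 <= e%:R :> R by [].
  nra.
- move=> t S d e b C v _ _ _ _ _ _ _ He; rewrite -natr1.
  have : 0 <= d%:R :> R by [].
  have : 0 <= e%:R :> R by [].
  nra.
Qed.

Lemma reach_inv (R : realFieldType) (p : R) (VH : finType) (hE : rel VH)
  (n : nat) (gE : rel 'I_n) (u : 'I_n -> bool) s1 s2 :
  0 <= p -> p < 1 ->
  @alg_reach R p VH hE n gE u s1 s2 -> @inv_ok R p n s1 -> @inv_ok R p n s2.
Proof.
move=> p0 p1; elim=> // a b c st _ IH H; apply: IH; exact: step_inv st H.
Qed.

Theorem mainTheorem2 (R : realFieldType) (p : R) (VH : finType) (hE : rel VH)
  (n : nat) (gE : rel 'I_n) (u : 'I_n -> bool) (s : alg_state n) :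
  symmetric hE -> irreflexive hE -> symmetric gE -> irreflexive gE ->
  0 <= p -> p < 1 ->
  (exists C : {set 'I_n}, induced_copy hE gE C) ->
  alg_reach p hE gE u (alg_init n) s ->
  revealed s = n -> H_free_on hE gE (remaining s) ->
  (0 < dcount s + ecount s)%N ->
  (dcount s)%:R / (ecount s + dcount s)%:R
    <= (1 - p) + 1 / (ecount s + dcount s)%:R.
Proof.
move=> _ _ _ _ p0 p1 _ hr _ _ pos.
have := @reach_inv R p VH hE n gE u _ _ p0 p1 hr.
rewrite /inv_ok /= !mulr0 subr0 => /(_ ler01).
have de : (0 < (ecount s + dcount s)%N%:R :> R) by rewrite ltr0n addnC.
rewrite -(ler_pM2r de) mulfVK ?gt_eqF // natrD => H.
rewrite natrD in de.
rewrite mulrDl div1r mulVf ?gt_eqF //.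
rewrite -subr_ge0; rewrite -subr_ge0 in H.
apply: le_trans H _; rewrite le_eqVlt; apply/orP; left; apply/eqP.
move: (dcount s)%:R (ecount s)%:R => x y; ring.
Qed.
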